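(* Let $\mathcal{M}$ be a finite $\mathcal{R}$-trivial monoid with $n=\#\mathcal{M}$, with elements ordered so that $\#\sigma_1\mathcal{M}\ge\dots\ge\#\sigma_n\mathcal{M}$ (so all elements of $\mathcal{U}^{\mathbb{Z}}_{\mathcal{M}}$ are upper triangular). Then: (1) Every idempotent element of $\mathcal{U}^{\mathbb{Z}}_{\mathcal{M}}$ has only entries $0$ and $1$ on its diagonal. (2) If $E\in\mathcal{U}^{\mathbb{Z}}_{\mathcal{M}}$ is idempotent and $\mathcal{D}_E$ is a single equivalence class of the loop-type relation $\sim$, then $E$ is primitive in $\mathcal{U}^{\mathbb{Z}}_{\mathcal{M}}$: whenever $E=X+Y$ with $X,Y\in\mathcal{U}^{\mathbb{Z}}_{\mathcal{M}}$, $X^2=X$, $Y^2=Y$, $XY=YX=0$, then $X=0$ or $Y=0$. (3) If $U\in\mathcal{U}^{\mathbb{Z}}_{\mathcal{M}}$ has only entries $0$ and $1$ on its diagonal, and $a,b\in\mathbb{Z}_{\ge0}$ satisfy $a\ge n-d_U$ and $b\ge d_U$, then $\mathcal{P}_{a,b}(U)=\mathrm{Id}-(\mathrm{Id}-U^a)^b$ is idempotent and has the same diagonal as $U$.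
   Context: $\mathcal{M}$ is $\mathcal{R}$-trivial: $\sigma\mathcal{M}=\tau\mathcal{M}$ implies $\sigma=\tau$. Matrices in $\mathrm{Mat}(\mathbb{Z},n)$ are indexed by elements of $\mathcal{M}$ according to the chosen ordering. $U_\sigma$ is the matrix with $(U_\sigma)_{\tau,\kappa}=1$ if $\tau\sigma=\kappa$ and $0$ otherwise; $\mathcal{U}^{\mathbb{Z}}_{\mathcal{M}}:=\{\sum_{\mu\in\mathcal{M}} r_\mu U_\mu : r_\mu\in\mathbb{Z}\}\subset\mathrm{Mat}(\mathbb{Z},n)$ (a subring isomorphic to the monoid ring $\mathbb{Z}\mathcal{M}$ via $\mu\mapsto U_\mu$). For $U\in\mathcal{U}^{\mathbb{Z}}_{\mathcal{M}}$: $\mathcal{D}_U:=\{\sigma\in\mathcal{M}: U_{\sigma,\sigma}=1\}$ and $d_U:=\#\mathcal{D}_U$. $\mathcal{L}_\sigma:=\{\tau:\sigma\tau=\sigma\}$, and $\sigma\sim\kappa$ (same loop-type) iff $\mathcal{L}_\sigma=\mathcal{L}_\kappa$. $\mathcal{P}_{a,b}(U):=\mathrm{Id}-(\mathrm{Id}-U^a)^b$ for $a,b\in\mathbb{Z}_{\ge 0}$. *)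

(* Defs.v *)
From HB Require Import structures.
From mathcomp Require Import all_boot all_order all_algebra.
Set Implicit Arguments. Unset Strict Implicit. Unset Printing Implicit Defensive.
Import Order.TTheory GRing.Theory Num.Theory.
Local Open Scope ring_scope.

Section MonoidMatrices.
Variables (T : finType) (mul : T -> T -> T).

Definition rideal (s : T) : {set T} := [set mul s x | x : T].

Definition Lset (s : T) : {set T} := [set t | mul s t == s].

Variables (n : nat) (e : 'I_n -> T).

Definition Umat (s : T) : 'M[int]_n :=
  \matrix_(i < n, j < n) (if mul (e i) s == e j then 1 else 0).

Definition inUZ (A : 'M[int]_n) : Prop :=
  exists r : T -> int, A = \sum_(m : T) r m *: Umat m.

Definition Dset (A : 'M[int]_n) : {set T} :=
  [set s : T | [exists i : 'I_n, (e i == s) && (A i i == 1)]].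

Definition dU (A : 'M[int]_n) : nat := #|Dset A|.

Definition Pab (a b : nat) (A : 'M[int]_n) : 'M[int]_n :=
  1%:M - (1%:M - A ^+ a) ^+ b.

End MonoidMatrices.

(* Main.v *)
Require Import Defs.
From HB Require Import structures.
From mathcomp Require Import all_boot all_order all_algebra.
From mathcomp Require Import zify ring.
Import Order.TTheory GRing.Theory Num.Theory.
Local Open Scope ring_scope.

Definition utri {R : pzSemiRingType} {n} (A : 'M[R]_n) :=
  forall i j : 'I_n, (j < i)%N -> A i j = 0.

Lemma char_poly_tr (R : comNzRingType) n (A : 'M[R]_n) : char_poly A^T = char_poly A.
Proof.
rewrite /char_poly -det_tr; congr (\det _).
by apply/matrixP => i j; rewrite !mxE eq_sym.
Qed.

Lemma char_poly_utrig (R : comNzRingType) n (A : 'M[R]_n) : utri A ->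
  char_poly A = \prod_(i < n) ('X - (A i i)%:P).
Proof.
move=> H; rewrite -char_poly_tr char_poly_trig.
  by apply: eq_bigr => i _; rewrite mxE.
by apply/is_trig_mxP => i j lt; rewrite mxE H.
Qed.

Lemma utri_mul (R : pzSemiRingType) n (A B : 'M[R]_n) : utri A -> utri B -> utri (A *m B).
Proof.
move=> HA HB i j lt; rewrite mxE big1 // => k _.
case: (ltnP k i) => hk; first by rewrite HA // mul0r.
by rewrite HB ?mulr0 //; apply: leq_trans lt hk.
Qed.

Lemma diag_mul (R : pzSemiRingType) n (A B : 'M[R]_n) : utri A -> utri B ->
  forall i, (A *m B) i i = A i i * B i i.
Proof.
move=> HA HB i; rewrite mxE (bigD1 i) //= big1 ?addr0 // => k nk.
case: (ltngtP k i) => hk; first by rewrite HA // mul0r.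
  by rewrite HB ?mulr0.
by move/val_inj: hk nk => ->; rewrite eqxx.
Qed.

Lemma utri1 (R : pzSemiRingType) n : utri (1%:M : 'M[R]_n).
Proof. by move=> i j lt; rewrite mxE -val_eqE eq_sym /= (ltn_eqF lt). Qed.

Lemma utriB (R : pzRingType) n (A B : 'M[R]_n) : utri A -> utri B -> utri (A - B).
Proof. by move=> HA HB i j lt; rewrite !mxE HA // HB // subrr. Qed.

Lemma utriX (R : pzRingType) n (A : 'M[R]_n.+1) k : utri A -> utri (A ^+ k).
Proof.
move=> HA; elim: k => [|k IH]; first by rewrite expr0 -idmxE; apply: utri1.
by rewrite exprS -mulmxE; apply: utri_mul.
Qed.

Lemma diagX (R : pzRingType) n (A : 'M[R]_n.+1) k : utri A ->
  forall i, (A ^+ k) i i = (A i i) ^+ k.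
Proof.
move=> HA i; elim: k => [|k IH]; first by rewrite !expr0 -idmxE mxE eqxx.
by rewrite exprS -mulmxE diag_mul ?IH ?exprS //; apply: utriX.
Qed.

Lemma key n (U : 'M[int]_n.+1) : utri U -> (forall i, U i i = 0 \/ U i i = 1) ->
  U ^+ #|[set i | U i i != 1]| * (U - 1) ^+ #|[set i | U i i == 1]| = 0.
Proof.
move=> HU HD; have CH := Cayley_Hamilton U.
rewrite char_poly_utrig // (bigID (fun i => U i i == 1)) /= in CH.
have P1 : \prod_(i | U i i == 1) ('X - (U i i)%:P) = ('X - 1) ^+ #|[set i | U i i == 1]|.
  rewrite (eq_bigr (fun=> 'X - 1)); last by move=> i /eqP ->.
  by rewrite -prodr_const; apply: eq_bigl => i; rewrite inE.
have P2 : \prod_(i | U i i != 1) ('X - (U i i)%:P) = 'X ^+ #|[set i | U i i != 1]|.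
  rewrite (eq_bigr (fun=> 'X)); last first.
    by move=> i; case: (HD i) => ->; rewrite ?eqxx // subr0.
  by rewrite -prodr_const; apply: eq_bigl => i; rewrite inE.
rewrite P1 P2 mulrC rmorphM /= in CH.
rewrite !rmorphXn /= rmorphB /= rmorph1 horner_mx_X in CH. exact: CH.
Qed.
Arguments key {n U}.

Lemma poly_id (a b z o : nat) : (z <= a)%N -> (o <= b)%N ->
  exists k : {poly int},
    (1 - 'X^a) ^+ b * (1 - 'X^a) ^+ b - (1 - 'X^a) ^+ b
    = 'X ^+ z * ('X - 1) ^+ o * k.
Proof.
move=> hz ho.
pose X : {poly int} := 'X.
pose g := \sum_(i < a) X ^+ i.
have h1 : 1 - X ^+ a = (X - 1) * (- g).
  by rewrite mulrN /g -subrX1; ring.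
pose S := \sum_(i < b) (1 - X ^+ a) ^+ i.
have h2 : (1 - X ^+ a) ^+ b - 1 = - (X ^+ z * X ^+ (a - z)) * S.
  by rewrite subrX1 -exprD subnKC // /S; ring.
have h3 : (1 - X ^+ a) ^+ b = (X - 1) ^+ o * (X - 1) ^+ (b - o) * (- g) ^+ b.
  by rewrite h1 exprMn -exprD subnKC.
exists ((X - 1) ^+ (b - o) * (- g) ^+ b * (- X ^+ (a - z)) * S).
rewrite -/X.
have -> : forall q : {poly int}, q * q - q = q * (q - 1) by move=> q; rewrite mulrBr mulr1.
rewrite h2 {1}h3; clear h1 h2 h3.
move: ((X - 1) ^+ o) ((X - 1) ^+ (b - o)) ((- g) ^+ b) (X ^+ z) (X ^+ (a - z)) S.
move=> A B C D E F; ring.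
Qed.

Lemma idemQ n (U : 'M[int]_n.+1) a b : utri U -> (forall i, U i i = 0 \/ U i i = 1) ->
  (#|[set i | U i i != 1]| <= a)%N -> (#|[set i | U i i == 1]| <= b)%N ->
  (1 - U ^+ a) ^+ b * (1 - U ^+ a) ^+ b = (1 - U ^+ a) ^+ b.
Proof.
move=> HU HD ha hb; have [k hk] := @poly_id _ _ _ _ ha hb.
have := congr1 (horner_mx U) hk.
rewrite !(rmorphM, rmorphB, rmorphXn, rmorph1, horner_mx_X) /=.
rewrite !horner_mx_X key // mul0r => /eqP; rewrite subr_eq0 => /eqP //.
Qed.
Arguments idemQ {n U a b}.

Lemma UZ_entry (T : finType) (mul : T -> T -> T) n (e : 'I_n -> T) (A : 'M[int]_n) r :
  A = \sum_(m : T) r m *: Umat mul e m ->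
  forall i j, A i j = \sum_(m : T) r m * (if mul (e i) m == e j then 1 else 0).
Proof.
move=> -> i j; rewrite summxE; apply: eq_bigr => m _; by rewrite !mxE.
Qed.
Arguments UZ_entry {T mul n e A r}.

Lemma UZ_utri (T : finType) (mul : T -> T -> T)
  (mulA : forall x y z, mul x (mul y z) = mul (mul x y) z)
  (Rtriv : forall s t, rideal mul s = rideal mul t -> s = t)
  n (e : 'I_n -> T) (e_bij : bijective e)
  (e_ord : forall i j : 'I_n, (i <= j)%N ->
             (#|rideal mul (e j)| <= #|rideal mul (e i)|)%N)
  (A : 'M[int]_n) : inUZ mul e A -> utri A.
Proof.
move=> [r hr] i j lt; rewrite (UZ_entry hr) big1 // => m _.
case: eqP => [h|]; last by rewrite mulr0.
exfalso.
have sub : rideal mul (e j) \subset rideal mul (e i).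
  apply/subsetP => x /imsetP [y _ ->]; apply/imsetP; exists (mul m y) => //.
  by rewrite -h mulA.
have hc := e_ord j i (ltnW lt).
have : rideal mul (e j) == rideal mul (e i) by rewrite eqEcard sub hc.
move/eqP/Rtriv/(bij_inj e_bij) => eij.
by move: lt; rewrite eij ltnn.
Qed.

Lemma UZ_diag (T : finType) (mul : T -> T -> T) n (e : 'I_n -> T)
  (A : 'M[int]_n) : inUZ mul e A ->
  forall i j, Lset mul (e i) = Lset mul (e j) -> A i i = A j j.
Proof.
move=> [r hr] i j hL; rewrite !(UZ_entry hr); apply: eq_bigr => m _.
have E : forall k, (mul (e k) m == e k) = (m \in Lset mul (e k)) by move=> k; rewrite inE.
by rewrite !E hL.
Qed.

Lemma nil_idem n (W : 'M[int]_n) : utri W -> (forall i, W i i = 0) -> W *m W = W -> W = 0.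
Proof.
case: n W => [|n] W HW hd hWW; first by apply/matrixP => [[]].
have hd' : forall i, W i i = 0 \/ W i i = 1 by move=> i; left.
have := key HW hd'.
have -> : [set i | W i i == 1] = set0 by apply/setP => i; rewrite !inE hd.
have -> : [set i | W i i != 1] = setT by apply/setP => i; rewrite !inE hd.
rewrite cards0 expr0 mulr1 cardsT card_ord.
have hX : forall k, W ^+ k.+1 = W.
  elim=> [|k IH]; first by rewrite expr1.
  by rewrite exprS IH -mulmxE.
by rewrite hX.
Qed.

Lemma part3 n (U : 'M[int]_n) a b : utri U -> (forall i, U i i = 0 \/ U i i = 1) ->
  (n - #|[set i | U i i == 1]| <= a)%N -> (#|[set i | U i i == 1]| <= b)%N ->
  Pab a b U *m Pab a b U = Pab a b U /\ (forall i, Pab a b U i i = U i i).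
Proof.
case: n U => [|n] U HU hd ha hb.
  by split; [apply/matrixP => [[]] | case].
have c : (#|[set i | U i i == 1]| + #|[set i | U i i != 1]| = n.+1)%N.
  rewrite -[RHS](card_ord n.+1) -(cardsC [set i | U i i == 1]); congr (_ + _).
  by apply: eq_card => i; rewrite !inE.
have hz : (#|[set i | U i i != 1]| <= a)%N by lia.
have hQ := idemQ HU hd hz hb.
split.
  by rewrite /Pab mulmxE idmxE mulrBl mul1r mulrBr mulr1 hQ subrr subr0.
move=> i; rewrite /Pab mxE.
have HQ : utri (1%:M - U ^+ a) by apply: utriB; [apply: utri1 | apply: utriX].
rewrite [X in _ + X]mxE (@diagX _ _ _ b HQ) !mxE eqxx (@diagX _ _ _ a HU) /=.
case: (hd i) => hi; rewrite hi.
  have : (0 < #|[set i | U i i != 1]|)%N by apply/card_gt0P; exists i; rewrite inE hi.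
  move=> h0; have : (0 < a)%N by lia.
  by case: a {ha hz hQ HQ} => // a _; rewrite expr0n /= subr0 expr1n subrr.
have : (0 < #|[set i | U i i == 1]|)%N by apply/card_gt0P; exists i; rewrite inE hi.
move=> h0; have : (0 < b)%N by lia.
by case: b {hb hQ} => // b _; rewrite expr1n subrr expr0n /= subr0.
Qed.
Theorem mainTheorem6
  (T : finType) (mul : T -> T -> T) (one : T)
  (mulA : forall x y z, mul x (mul y z) = mul (mul x y) z)
  (mul1x : forall x, mul one x = x)
  (mulx1 : forall x, mul x one = x)
  (Rtriv : forall s t, rideal mul s = rideal mul t -> s = t)
  (n : nat) (n_eq : n = #|T|)
  (e : 'I_n -> T) (e_bij : bijective e)
  (e_ord : forall i j : 'I_n, (i <= j)%N ->
             (#|rideal mul (e j)| <= #|rideal mul (e i)|)%N) :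
  (* (1) *)
  (forall E : 'M[int]_n, inUZ mul e E -> E *m E = E ->
     forall i, E i i = 0 \/ E i i = 1) /\
  (* (2) *)
  (forall E : 'M[int]_n, inUZ mul e E -> E *m E = E ->
     (exists s : T, Dset e E = [set k : T | Lset mul k == Lset mul s]) ->
     forall X Y : 'M[int]_n, inUZ mul e X -> inUZ mul e Y ->
       E = X + Y -> X *m X = X -> Y *m Y = Y -> X *m Y = 0 -> Y *m X = 0 ->
       X = 0 \/ Y = 0) /\
  (* (3) *)
  (forall U : 'M[int]_n, inUZ mul e U ->
     (forall i, U i i = 0 \/ U i i = 1) ->
     forall a b : nat, (n - dU e U <= a)%N -> (dU e U <= b)%N ->
       Pab a b U *m Pab a b U = Pab a b U /\
       (forall i, Pab a b U i i = U i i)).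
Proof.
have HU := @UZ_utri T mul mulA Rtriv n e e_bij e_ord.
have P1 : forall E : 'M[int]_n, inUZ mul e E -> E *m E = E ->
     forall i, E i i = 0 \/ E i i = 1.
  move=> E hE hEE i; have := @diag_mul _ _ E E (HU E hE) (HU E hE) i; rewrite hEE => h.
  have : E i i * (E i i - 1) = 0 by rewrite mulrBr mulr1 -h subrr.
  by move/eqP; rewrite mulf_eq0 subr_eq0 => /orP [/eqP|/eqP]; auto.
split; first exact: P1.
split.
  move=> E hE hEE [s hs] X Y hX hY hEXY hXX hYY hXY hYX.
  have dX := P1 X hX hXX; have dY := P1 Y hY hYY; have dE := P1 E hE hEE.
  have hEd : forall i, E i i = X i i + Y i i by move=> i; rewrite hEXY mxE.
  have inD : forall i, E i i = 1 -> Lset mul (e i) = Lset mul s.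
    move=> i h; have : e i \in Dset e E by rewrite inE; apply/existsP; exists i; rewrite eqxx h.
    by rewrite hs inE => /eqP.
  case: (boolP [forall i, X i i == 0]) => [/forallP hx | /forallPn [i hi]].
    by left; apply: (@nil_idem _ X (HU X hX) _ hXX) => i; exact/eqP.
  right; apply: (@nil_idem _ Y (HU Y hY) _ hYY) => j.
  have hxi : X i i = 1 by case: (dX i) => // h; rewrite h eqxx in hi.
  have hei : E i i = 1 by move: (dE i) (dY i) (hEd i); lia.
  case: (dY j) => // hyj.
  have hej : E j j = 1 by move: (dE j) (dX j) (hEd j); lia.
  have hxj : X j j = 0 by move: (dE j) (dX j) (hEd j); lia.
  have := @UZ_diag T mul n e X hX i j; rewrite (inD i hei) (inD j hej) hxi hxj => h.
  by have := h erefl.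
move=> U hU hd a b ha hb.
have hdU : dU e U = #|[set i | U i i == 1]|.
  rewrite /dU -(card_imset _ (bij_inj e_bij)); apply: eq_card => s.
  rewrite /Dset inE; apply/existsP/imsetP.
    by move=> [i /andP [/eqP <- /eqP h]]; exists i; rewrite // inE h.
  by move=> [i]; rewrite inE => /eqP h ->; exists i; rewrite eqxx h.
rewrite hdU in ha hb.
exact: (@part3 _ U a b (HU U hU)) hd ha hb.
Qed.
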